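(* Let $n\ge1$. (1) The action of $N_{\Delta_n}\times N_{\Delta_n^*}\subset\mathbb{T}^{n+1}\times\mathbb{T}^{n+1}$ on $P$ is free and preserves $\tilde\omega_1,\tilde\omega_2,\tilde g,\tilde\omega_D$, and $\mu_1,\mu_2$ are invariant under it. (2) For $k_1<0$ and $k_2\in\mathbb{R}$, the set $\mu_1^{-1}(k_1)\cap\mu_2^{-1}(k_2)\subset P$ is nonempty if and only if $\frac{-k_1}{\pi}e^{\frac{4\pi}{n+1}k_2}\ge n+1$. (3) If $\frac{-k_1}{\pi}e^{\frac{4\pi}{n+1}k_2}> n+1$, then $d\mu_1\wedge d\mu_2\neq0$ at every point of $\mu_1^{-1}(k_1)\cap\mu_2^{-1}(k_2)$.
   Context: Write $\mathbb{T}^k=\mathbb{R}^k/\mathbb{Z}^k$. Let $u_i=e_i$ ($1\le i\le n$), $u_{n+1}=-(1,\dots,1)$, $v_i=(n+1)e_i-(1,\dots,1)$ ($1\le i\le n$), $v_{n+1}=-(1,\dots,1)$ in $\mathbb{R}^n$. Let $f_{\Delta_n},f_{\Delta_n^*}:\mathbb{T}^{n+1}\to\mathbb{T}^n$ be the homomorphisms induced by $x\mapsto\sum_ix_iu_i$ and $x\mapsto\sum_ix_iv_i$ respectively, $N_{\Delta_n}=\ker f_{\Delta_n}$, $N_{\Delta_n^*}=\ker f_{\Delta_n^*}$. Let $P=(\mathbb{C}^* )^{n+1}\times_\mu(\mathbb{C}^* )^{n+1}$, identified via global coordinates $(\theta,r,\eta)\in\mathbb{T}^{n+1}\times(\mathbb{R}_{>0})^{n+1}\times\mathbb{T}^{n+1}$.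 On $P$ let $\tilde\omega_1=2\pi\sum_j r_j\,dr_j\wedge d\theta_j$, $\tilde\omega_2=\frac1{2\pi}\sum_j\frac1{r_j}dr_j\wedge d\eta_j$, $\tilde g=\sum_j\big(dr_j^2+4\pi^2r_j^2d\theta_j^2+\frac{1}{4\pi^2r_j^2}d\eta_j^2\big)$, $\tilde\omega_D=\sum_jd\theta_j\wedge d\eta_j$. The group $\mathbb{T}^{n+1}\times\mathbb{T}^{n+1}$ acts on $P$ by translation of $\theta$ and of $\eta$ respectively. Define $\mu_1,\mu_2:P\to\mathbb{R}$ by $\mu_1=-\pi\sum_{j}r_j^2$ and $\mu_2=-\frac1{2\pi}\log\big(\prod_j r_j\big)$. *)

(* Defs.v *)
From HB Require Import structures.
From mathcomp Require Import all_boot all_order all_algebra.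
From mathcomp Require Import all_classical all_reals all_analysis.
Set Implicit Arguments. Unset Strict Implicit. Unset Printing Implicit Defensive.
Import Order.TTheory GRing.Theory Num.Theory.
Import numFieldNormedType.Exports.
Local Open Scope ring_scope.

(* Global coordinates on P = T^{n+1} x (R_{>0})^{n+1} x T^{n+1}, lifted to the
   universal cover: a point is a 3 x (n+1) real matrix whose row 0 is theta
   (mod Z), row 1 is r (> 0), row 2 is eta (mod Z).  Tangent vectors at a point
   are also 3 x (n+1) matrices (components dtheta, dr, deta). *)
Definition Pcoord (R : realType) (n : nat) := 'M[R]_(3, n.+1).

Definition th_ {R : realType} {n : nat} (p : Pcoord R n) (j : 'I_n.+1) : R := p ord0 j.
Definition r_ {R : realType} {n : nat} (p : Pcoord R n) (j : 'I_n.+1) : R := p (inord 1) j.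
Definition et_ {R : realType} {n : nat} (p : Pcoord R n) (j : 'I_n.+1) : R := p (inord 2) j.

Definition inP {R : realType} {n : nat} (p : Pcoord R n) : Prop :=
  forall j, 0 < r_ p j.

Definition is_intR {R : realType} (x : R) : Prop := exists z : int, x = z%:~R.

Definition torus_eq {R : realType} {k : nat} (x y : 'I_k -> R) : Prop :=
  forall j, is_intR (x j - y j).

Definition P_eq {R : realType} {n : nat} (p q : Pcoord R n) : Prop :=
  torus_eq (th_ p) (th_ q) /\ (forall j, r_ p j = r_ q j) /\ torus_eq (et_ p) (et_ q).

(* the vectors u_j and v_j in R^n, for j = 0..n (u_{n+1}, v_{n+1} of the paper
   is index j = n here); coordinate i < n *)
Definition u_vec {R : realType} (n : nat) (j : 'I_n.+1) (i : 'I_n) : R :=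
  ((val j == val i)%:R) - ((val j == n)%:R).
Definition v_vec {R : realType} (n : nat) (j : 'I_n.+1) (i : 'I_n) : R :=
  n.+1%:R * ((val j == val i)%:R) - 1.

(* kernel of the homomorphism T^{n+1} -> T^n induced by x |-> sum_j x_j w_j *)
Definition in_kernel {R : realType} {n : nat} (w : 'I_n.+1 -> 'I_n -> R)
  (x : 'I_n.+1 -> R) : Prop :=
  forall i : 'I_n, is_intR (\sum_j x j * w j i).

Definition N_Delta {R : realType} (n : nat) (x : 'I_n.+1 -> R) : Prop :=
  in_kernel (@u_vec R n) x.
Definition N_Delta_star {R : realType} (n : nat) (x : 'I_n.+1 -> R) : Prop :=
  in_kernel (@v_vec R n) x.
Arguments N_Delta {R} n x.
Arguments N_Delta_star {R} n x.

Definition act {R : realType} {n : nat} (a b : 'I_n.+1 -> R) (p : Pcoord R n)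
  : Pcoord R n :=
  p + \matrix_(i < 3, j < n.+1)
        (if val i == 0%N then a j else if val i == 2%N then b j else 0).

(* covariant 2-tensors (2-forms, metrics) on P, in coordinates *)
Definition tensor2 (R : realType) (n : nat) := Pcoord R n -> Pcoord R n -> Pcoord R n -> R.

Definition pullback {R : realType} {n : nat} (F : Pcoord R n -> Pcoord R n)
  (T : tensor2 R n) : tensor2 R n :=
  fun p v w => T (F p) (derive F p v) (derive F p w).

Definition preserves {R : realType} {n : nat} (F : Pcoord R n -> Pcoord R n)
  (T : tensor2 R n) : Prop :=
  forall p, inP p -> forall v w, pullback F T p v w = T p v w.

Definition wedge {R : realType} (xv yv xw yw : R) : R := xv * yw - xw * yv.

Definition omega1 {R : realType} {n : nat} : tensor2 R n := fun p v w =>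
  2 * pi * \sum_j r_ p j * wedge (r_ v j) (th_ v j) (r_ w j) (th_ w j).

Definition omega2 {R : realType} {n : nat} : tensor2 R n := fun p v w =>
  (2 * pi)^-1 * \sum_j (r_ p j)^-1 * wedge (r_ v j) (et_ v j) (r_ w j) (et_ w j).

Definition gmetric {R : realType} {n : nat} : tensor2 R n := fun p v w =>
  \sum_j (r_ v j * r_ w j + 4 * pi ^+ 2 * (r_ p j) ^+ 2 * (th_ v j * th_ w j)
          + (4 * pi ^+ 2 * (r_ p j) ^+ 2)^-1 * (et_ v j * et_ w j)).

Definition omegaD {R : realType} {n : nat} : tensor2 R n := fun p v w =>
  \sum_j wedge (th_ v j) (et_ v j) (th_ w j) (et_ w j).

Definition mu1 {R : realType} {n : nat} (p : Pcoord R n) : R :=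
  - pi * \sum_j (r_ p j) ^+ 2.

Definition mu2 {R : realType} {n : nat} (p : Pcoord R n) : R :=
  - (2 * pi)^-1 * ln (\prod_j r_ p j).

Definition dwedge {R : realType} {n : nat} (f g : Pcoord R n -> R) : tensor2 R n :=
  fun p v w => wedge (derive f p v) (derive g p v) (derive f p w) (derive g p w).

(* Main.v *)
Require Import Defs.
From HB Require Import structures.
From mathcomp Require Import all_boot all_order all_algebra.
From mathcomp Require Import all_classical all_reals all_analysis.
From mathcomp Require Import ring lra.
Import Order.TTheory GRing.Theory Num.Theory.
Import numFieldNormedType.Exports.
Local Open Scope ring_scope.
Local Open Scope classical_set_scope.


Lemma derive_line (R : realType) (n : nat) (f : Pcoord R n -> R) p v :
  derive f p v = derive1 (fun t => f (t *: v + p)) 0.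
Proof.
rewrite /derive /derive1.
have -> : (fun h : R => h^-1 *: ((f \o shift p) (h *: v) - f p)) = (fun h => h^-1 *: ((fun t => f (t *: v + p)) (h + 0) - (fun t => f (t *: v + p)) 0)).
  by apply/funext => h /=; rewrite addr0 scale0r add0r.
by [].
Qed.

Lemma derive_act (R : realType) (n : nat) (a b : 'I_n.+1 -> R) p v :
  derive (act a b) p v = v.
Proof.
set M := \matrix_(i < 3, j < n.+1)
        (if val i == 0%N then a j else if val i == 2%N then b j else 0).
have -> : act a b = (fun q => q) + cst M by apply/funext => q.
rewrite deriveD; last 2 first.
- exact: derivable_id.
- exact: ex_derive.
by rewrite derive_id derive_cst addr0.
Qed.

Lemma r_act (R : realType) (n : nat) (a b : 'I_n.+1 -> R) p :
  r_ (act a b p) = r_ p.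
Proof.
apply/funext => j; rewrite /r_ /act !mxE.
have -> : \val (inord 1 : 'I_3) = 1%N by rewrite /= inordK.
by rewrite /= addr0.
Qed.


Lemma d1 (R : realType) (r C c : R) :
  derive1 (fun t : R => c * ((t + r)^+2 + C)) 0 = c * (2 * r).
Proof.
rewrite derive1E.
have H : is_derive (0:R) (1:R) (fun t : R => c * ((t + r)^+2 + C)) (c * (2 * r)).
  apply: is_derive_eq.
  by rewrite /GRing.scale /= add0r addr0; ring.
by rewrite derive_val.
Qed.

Lemma d2 (R : realType) (r C c : R) : 0 < r -> 0 < C ->
  derive1 (fun t : R => c * ln ((t + r) * C)) 0 = c / r.
Proof.
move=> r0 C0.
rewrite derive1E.
have Hl : is_derive ((fun t : R => (t + r) * C) 0) 1 (@ln R) (((0 + r) * C)^-1).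
  by apply: is_derive1_ln; rewrite add0r mulr_gt0.
have Hg : is_derive (0:R) 1 (fun t : R => (t + r) * C) C.
  by apply: is_derive_eq; rewrite scaler0 add0r addr0 /GRing.scale /= mulr1.
have Hc := @is_derive1_comp R (@ln R) (fun t : R => (t + r) * C) 0 _ _ Hl Hg.
have H : is_derive (0:R) (1:R) (fun t : R => c * ln ((t + r) * C)) (c / r).
  apply: is_derive_eq. rewrite /GRing.scale /= add0r.
  by rewrite invfM -mulrA mulVf ?mulr1 // gt_eqF.
by rewrite derive_val.
Qed.


Lemma Q_gt0 (R : realType) (n : nat) (p : Pcoord R n) : inP p -> 0 < \prod_j r_ p j.
Proof. by move=> hp; apply: prodr_gt0 => j _; apply: hp. Qed.

Lemma key (R : realType) (n : nat) (p : Pcoord R n) : inP p ->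
  expR ((4 * pi / n.+1%:R) * mu2 p) ^+ n.+1 * (\prod_j r_ p j) ^+ 2 = 1.
Proof.
move=> hp; have hQ := Q_gt0 _ _ _ hp.
rewrite -expRM_natl.
have -> : n.+1%:R * (4 * pi / n.+1%:R * mu2 p) = - (2%:R * ln (\prod_j r_ p j)).
  rewrite /mu2; move: (@pi_gt0 R); generalize (pi : R) => q q0.
  by field; rewrite gt_eqF //= pnatr_eq0.
have hQp : \prod_j r_ p j \in Num.pos by rewrite posrE.
rewrite expRN expRM_natl lnK //.
by rewrite mulVf // expf_neq0 // gt_eqF.
Qed.

Lemma fwd (R : realType) (n : nat) (p : Pcoord R n) : inP p ->
  n.+1%:R <= (\sum_j r_ p j ^+ 2) * expR ((4 * pi / n.+1%:R) * mu2 p).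
Proof.
move=> hp; have hk := key _ _ _ hp.
set x := expR _ in hk *.
have x0 : 0 < x by apply: expR_gt0.
have := (@leif_AGM R 'I_n.+1 predT (fun j => r_ p j ^+ 2 * x) _).1.
rewrite /= big_split /= prodr_const prodrXl cardT size_enum_ord mulrC hk.
move=> /(_ (fun i _ => mulr_ge0 (sqr_ge0 _) (ltW x0))).
rewrite -mulr_suml.
set y := (_ / _).
have y0 : 0 <= y.
  apply: divr_ge0 => //; apply: mulr_ge0; last exact: ltW.
  by apply: sumr_ge0 => i _; rewrite sqr_ge0.
move=> hy; have {hy} : 1 <= y.
  rewrite leNgt; apply/negP => hy1.
  by move: (exprn_ilt1 n.+1 y0 hy1) => /=; rewrite ltNge hy.
by rewrite /y ler_pdivlMr ?ltr0Sn // mul1r.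
Qed.

Lemma eqcase (R : realType) (n : nat) (p : Pcoord R n) : inP p ->
  (forall j, r_ p j = r_ p ord0) ->
  (\sum_j r_ p j ^+ 2) * expR ((4 * pi / n.+1%:R) * mu2 p) = n.+1%:R.
Proof.
move=> hp he; have hk := key _ _ _ hp.
set x := expR _ in hk *.
have x0 : 0 < x by apply: expR_gt0.
rewrite (eq_bigr (fun _ => r_ p ord0 ^+ 2)) ?sumr_const ?card_ord; last by move=> j _; rewrite he.
rewrite (eq_bigr (fun _ => r_ p ord0)) ?prodr_const ?card_ord in hk; last by move=> j _; rewrite he.
have : (x * r_ p ord0 ^+ 2) ^+ n.+1 = 1.
  by rewrite exprMn -exprM mulnC exprM hk.
move/eqP; rewrite pexpr_eq1 // ?mulr_ge0 ?sqr_ge0 ?ltW // => /eqP h.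
transitivity (n.+1%:R * (x * r_ p ord0 ^+ 2)); last by rewrite h mulr1.
rewrite -mulr_natl; ring.
Qed.


Definition ee (R : realType) (n : nat) (k : 'I_n.+1) : Pcoord R n :=
  @delta_mx R 3 n.+1 (inord 1) k.

Arguments ee {R n} k.

Lemma r_line (R : realType) (n : nat) (p : Pcoord R n) k (t : R) j :
  r_ (t *: ee k + p) j = t * (j == k)%:R + r_ p j.
Proof. by rewrite /r_ /ee !mxE eqxx /= eq_sym. Qed.

Lemma mu1_line (R : realType) (n : nat) (p : Pcoord R n) k :
  (fun t => mu1 (t *: ee k + p)) =
  fun t => -pi * ((t + r_ p k) ^+ 2 + \sum_(j | j != k) r_ p j ^+ 2).
Proof.
apply/funext => t; rewrite /mu1 (bigD1 k) //= r_line eqxx mulr1.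
congr (_ * (_ + _)); apply: eq_bigr => j /negbTE hj.
by rewrite r_line hj mulr0 add0r.
Qed.

Lemma mu2_line (R : realType) (n : nat) (p : Pcoord R n) k :
  (fun t => mu2 (t *: ee k + p)) =
  fun t => -(2 * pi)^-1 * ln ((t + r_ p k) * \prod_(j | j != k) r_ p j).
Proof.
apply/funext => t; rewrite /mu2 (bigD1 k) //= r_line eqxx mulr1.
congr (_ * ln (_ * _)); apply: eq_bigr => j /negbTE hj.
by rewrite r_line hj mulr0 add0r.
Qed.


Lemma bwd (R : realType) (m : nat) (S c : R) : 0 < c -> m.+2%:R * c ^+ 2 <= S ->
  exists p : Pcoord R m.+1, inP p /\ \sum_j r_ p j ^+ 2 = S /\ \prod_j r_ p j = c ^+ m.+2.
Proof.
move=> c0 hS.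
set T := S - m%:R * c ^+ 2.
have hT : 2 * c ^+ 2 <= T.
  rewrite /T lerBrDr; apply: le_trans hS; rewrite -mulrDl -natrD.
  by rewrite addnC addn2.
have hTe : S = T + m%:R * c ^+ 2 by rewrite /T subrK.
clearbody T.
have hc2 : 0 < c ^+ 2 by rewrite exprn_gt0.
have hA2 : Num.sqrt (T + 2 * c ^+ 2) ^+ 2 = T + 2 * c ^+ 2.
  by rewrite sqr_sqrtr //; lra.
have hB2 : Num.sqrt (T - 2 * c ^+ 2) ^+ 2 = T - 2 * c ^+ 2.
  by rewrite sqr_sqrtr //; lra.
have hB0 : 0 <= Num.sqrt (T - 2 * c ^+ 2) by apply: sqrtr_ge0.
have hAB : Num.sqrt (T - 2 * c ^+ 2) < Num.sqrt (T + 2 * c ^+ 2).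
  by rewrite ltr_sqrt; lra.
move: hA2 hB2 hB0 hAB.
generalize (Num.sqrt (T + 2 * c ^+ 2)) (Num.sqrt (T - 2 * c ^+ 2)) => A B hA2 hB2 hB0 hAB.
pose F (j : 'I_m.+2) := if val j == 0%N then (A + B) / 2 else if val j == 1%N then (A - B) / 2 else c.
exists (\matrix_(i < 3, j < m.+2) F j).
have rE j : r_ (\matrix_(i < 3, j < m.+2) F j) j = F j by rewrite /r_ mxE.
split; [|split].
- move=> j; rewrite rE /F; case: ifP => _; first lra.
  by case: ifP => _ //; lra.
- rewrite (eq_bigr (fun j => F j ^+ 2)); last by move=> j _; rewrite rE.
  rewrite !big_ord_recl /=.
  rewrite (eq_bigr (fun _ => c ^+ 2)) // sumr_const card_ord.
  rewrite /F /=.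
  have hT2 : T = (A ^+ 2 + B ^+ 2) / 2 by rewrite hA2 hB2; field.
  by rewrite hTe hT2 -mulr_natl; field.
- rewrite (eq_bigr F); last by move=> j _; rewrite rE.
  rewrite !big_ord_recl /=.
  rewrite (eq_bigr (fun _ => c)) // prodr_const card_ord.
  rewrite /F /=.
  have hc2' : c ^+ 2 = (A ^+ 2 - B ^+ 2) / 4 by rewrite hA2 hB2; field.
  by rewrite -[m.+2]/(2 + m)%N exprD hc2'; field.
Qed.

Lemma dmu1 (R : realType) (n : nat) (p : Pcoord R n) k :
  derive mu1 p (ee k) = -pi * (2 * r_ p k).
Proof. by rewrite derive_line mu1_line d1. Qed.

Lemma dmu2 (R : realType) (n : nat) (p : Pcoord R n) k : inP p ->
  derive mu2 p (ee k) = -(2 * pi)^-1 / r_ p k.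
Proof.
move=> hp; rewrite derive_line mu2_line d2 //.
by apply: prodr_gt0 => j _; apply: hp.
Qed.

Lemma val_inord2 : \val (inord 2 : 'I_3) = 2%N.
Proof. by rewrite /= inordK. Qed.

Theorem mainTheorem5 (R : realType) (n : nat) (hn : (1 <= n)%N) :
  (* (1) *)
  ((forall a b : 'I_n.+1 -> R, N_Delta n a -> N_Delta_star n b ->
      (forall p : Pcoord R n, inP p -> P_eq (act a b p) p ->
         torus_eq a (fun _ => 0) /\ torus_eq b (fun _ => 0))
      /\ (forall p : Pcoord R n, inP p -> inP (act a b p))
      /\ preserves (act a b) omega1 /\ preserves (act a b) omega2
      /\ preserves (act a b) gmetric /\ preserves (act a b) omegaD
      /\ (forall p : Pcoord R n, mu1 (act a b p) = mu1 p)
      /\ (forall p : Pcoord R n, mu2 (act a b p) = mu2 p))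
  (* (2) *)
  /\ (forall k1 k2 : R, k1 < 0 ->
        ((exists p : Pcoord R n, inP p /\ mu1 p = k1 /\ mu2 p = k2) <->
         n.+1%:R <= (- k1 / pi) * expR ((4 * pi / n.+1%:R) * k2)))
  (* (3) *)
  /\ (forall k1 k2 : R, k1 < 0 ->
        n.+1%:R < (- k1 / pi) * expR ((4 * pi / n.+1%:R) * k2) ->
        forall p : Pcoord R n, inP p -> mu1 p = k1 -> mu2 p = k2 ->
        exists v w : Pcoord R n, dwedge mu1 mu2 p v w != 0)).
Proof.
have pi0 : (pi : R) != 0 by rewrite gt_eqF // pi_gt0.
have Sk : forall (p : Pcoord R n) k1, mu1 p = k1 -> - k1 / pi = \sum_j r_ p j ^+ 2.
  move=> p k1 <-; rewrite /mu1; move: pi0; generalize (pi : R) => q q0.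
  by field.
split; [|split].
- move=> a b _ _.
  split; [|split; [|split; [|split; [|split; [|split; [|split]]]]]].
  + move=> p _ [hth [_ het]]; split => j.
    * have := hth j; rewrite /th_ /act !mxE /=.
      by rewrite addrAC subrr add0r subr0.
    * have := het j; rewrite /et_ /act !mxE val_inord2 /=.
      by rewrite addrAC subrr add0r subr0.
  + by move=> p hp j; rewrite r_act; apply: hp.
  + by move=> p _ v w; rewrite /pullback !derive_act /omega1 r_act.
  + by move=> p _ v w; rewrite /pullback !derive_act /omega2 r_act.
  + by move=> p _ v w; rewrite /pullback !derive_act /gmetric r_act.
  + by move=> p _ v w; rewrite /pullback !derive_act.
  + by move=> p; rewrite /mu1 r_act.
  + by move=> p; rewrite /mu2 r_act.
- move=> k1 k2 hk1; split.
  + case=> p [hp [h1 h2]]; rewrite (Sk _ _ h1) -h2.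
    exact: fwd.
  + move=> hineq; clear Sk.
    move: hn hineq; case: n => [//|m] _ hineq.
    have piP : 0 < (pi : R) by apply: pi_gt0.
    set S := - k1 / pi in hineq *.
    pose c := expR (- (2 * pi * k2) / m.+2%:R).
    have c0 : 0 < c by apply: expR_gt0.
    have hx : c ^+ 2 = (expR (4 * pi / m.+2%:R * k2))^-1.
      rewrite /c -expRM_natl -expRN; congr expR.
      have hm : (m.+2%:R : R) != 0 by rewrite pnatr_eq0.
      move: pi0 hm; generalize (pi : R) (m.+2%:R : R) => q N q0 hN.
      by field.
    have hS : m.+2%:R * c ^+ 2 <= S.
      by rewrite hx ler_pdivrMr // expR_gt0.
    have [p [hp [hs hq]]] := bwd _ _ _ _ c0 hS.
    exists p; split => //; split.
    * rewrite /mu1 hs /S; move: pi0; generalize (pi : R) => q q0.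
      by field.
    * rewrite /mu2 hq lnXn // /c expRK -mulr_natl.
      have hm : (m.+2%:R : R) != 0 by rewrite pnatr_eq0.
      move: pi0 hm; generalize (pi : R) (m.+2%:R : R) => q N q0 hN.
      field; rewrite q0 andbT gt_eqF //.
- move=> k1 k2 hk1 hlt p hp h1 h2.
  case: (pselect (exists j, r_ p j != r_ p ord0)) => [[j hj]|hno]; last first.
    have he : forall j, r_ p j = r_ p ord0.
      move=> j; apply/eqP; apply/negPn/negP => hne; apply: hno; by exists j.
    have := eqcase _ _ _ hp he.
    by move: hlt; rewrite (Sk _ _ h1) -h2 => /[swap] ->; rewrite ltxx.
  exists (ee ord0), (ee j).
  rewrite /dwedge !dmu1 !dmu2 // /wedge.
  have r0 := hp ord0; have rj := hp j.
  have -> : - pi * (2 * r_ p ord0) * (- (2 * pi)^-1 / r_ p j) -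
      - pi * (2 * r_ p j) * (- (2 * pi)^-1 / r_ p ord0) =
      (r_ p ord0 - r_ p j) * (r_ p ord0 + r_ p j) / (r_ p ord0 * r_ p j).
    move: pi0; generalize (pi : R) => q q0.
    by field; rewrite q0 !gt_eqF.
  apply: mulf_neq0; first apply: mulf_neq0.
  - by rewrite subr_eq0 eq_sym.
  - by rewrite gt_eqF // addr_gt0.
  - by rewrite invr_neq0 // mulf_neq0 // gt_eqF.
Qed.
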